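(* Let $(S,T,\alpha,\beta)$ be a matched product system of left inverse semi-braces. Then $S\times T$ with the operations $$(a,u)+(b,v)=(a+b,\,u+v),\qquad (a,u)(b,v)=\left(\alpha_u(\alpha_u^{-1}(a)\,b),\ \beta_a(\beta_a^{-1}(u)\,v)\right)$$ for all $(a,u),(b,v)\in S\times T$, is a left inverse semi-brace (called the matched product $S\bowtie T$).
   Context: An inverse semigroup is a semigroup $(S,\cdot)$ in which for each $a$ there is a unique $a^{-1}$ with $aa^{-1}a=a$, $a^{-1}aa^{-1}=a^{-1}$. A left inverse semi-brace is a triple $(S,+,\cdot)$ with $(S,+)$ a semigroup, $(S,\cdot)$ an inverse semigroup and $a(b+c)=ab+a(a^{-1}+c)$ for all $a,b,c$. A matched product system of left inverse semi-braces is a quadruple $(S,T,\alpha,\beta)$ where $S,T$ are left inverse semi-braces, $\alpha:T\to\mathrm{Aut}(S,+)$ is a homomorphism of inverse semigroups from $(T,\cdot)$ into the automorphism group of $(S,+)$, $\beta:S\to\mathrm{Aut}(T,+)$ is a homomorphism of inverse semigroups from $(S,\cdot)$ into the automorphism group of $(T,+)$ (write $\alpha_u=\alpha(u)$, $\beta_a=\beta(a)$, and $\alpha_u^{-1},\beta_a^{-1}$ for the inverse maps), such that for all $a,b\in S$, $u,v\in T$: $\alpha_u(\alpha_u^{-1}(a)\,b)=a\,\alpha_{\beta_a^{-1}(u)}(b)$ and $\beta_a(\beta_a^{-1}(u)\,v)=u\,\beta_{\alpha_u^{-1}(a)}(v)$; and if $\alpha_u(\alpha_u^{-1}(a)\,a)=a$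 and $\beta_a(\beta_a^{-1}(u)\,u)=u$, then $\alpha_u(a)=a$ and $\beta_a(u)=u$. *)

(* Defs.v *)
Definition semigroup {S : Type} (op : S -> S -> S) : Prop :=
  forall a b c, op a (op b c) = op (op a b) c.

Definition is_inverse_of {S : Type} (mul : S -> S -> S) (a b : S) : Prop :=
  mul (mul a b) a = a /\ mul (mul b a) b = b.

Definition inverse_semigroup {S : Type} (mul : S -> S -> S) : Prop :=
  semigroup mul /\ forall a, exists! b, is_inverse_of mul a b.

Definition left_inverse_semi_brace {S : Type} (add mul : S -> S -> S) : Prop :=
  semigroup add /\ inverse_semigroup mul /\
  forall a ainv b c, is_inverse_of mul a ainv ->
    mul a (add b c) = add (mul a b) (mul a (add ainv c)).

Definition add_automorphism {S : Type} (add : S -> S -> S) (f finv : S -> S) : Prop :=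
  (forall x y, f (add x y) = add (f x) (f y)) /\
  (forall x, finv (f x) = x) /\ (forall x, f (finv x) = x).

Definition matched_product_system {S T : Type}
  (addS mulS : S -> S -> S) (addT mulT : T -> T -> T)
  (alpha alphainv : T -> S -> S) (beta betainv : S -> T -> T) : Prop :=
  left_inverse_semi_brace addS mulS /\
  left_inverse_semi_brace addT mulT /\
  (forall u, add_automorphism addS (alpha u) (alphainv u)) /\
  (forall a, add_automorphism addT (beta a) (betainv a)) /\
  (forall u v x, alpha (mulT u v) x = alpha u (alpha v x)) /\
  (forall a b y, beta (mulS a b) y = beta a (beta b y)) /\
  (forall a b u, alpha u (mulS (alphainv u a) b) = mulS a (alpha (betainv a u) b)) /\
  (forall a u v, beta a (mulT (betainv a u) v) = mulT u (beta (alphainv u a) v)) /\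
  (forall a u, alpha u (mulS (alphainv u a) a) = a ->
               beta a (mulT (betainv a u) u) = u ->
               alpha u a = a /\ beta a u = u).

Definition mp_add {S T : Type} (addS : S -> S -> S) (addT : T -> T -> T)
  (x y : S * T) : S * T :=
  (addS (fst x) (fst y), addT (snd x) (snd y)).

Definition mp_mul {S T : Type} (mulS : S -> S -> S) (mulT : T -> T -> T)
  (alpha alphainv : T -> S -> S) (beta betainv : S -> T -> T)
  (x y : S * T) : S * T :=
  let (a, u) := x in let (b, v) := y in
  (alpha u (mulS (alphainv u a) b), beta a (mulT (betainv a u) v)).

(* Main.v *)
Require Import Defs.
From Stdlib Require Import Setoid.


Lemma mps_swap {S T : Type} (addS mulS : S -> S -> S) (addT mulT : T -> T -> T)
  (alpha alphainv : T -> S -> S) (beta betainv : S -> T -> T) :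
  matched_product_system addS mulS addT mulT alpha alphainv beta betainv ->
  matched_product_system addT mulT addS mulS beta betainv alpha alphainv.
Proof.
  intros (BS & BT & AA & AB & HA & HB & H1 & H2 & HL).
  refine (conj BT (conj BS (conj AB (conj AA (conj HB (conj HA
    (conj (fun a b u => H2 u a b) (conj (fun a u v => H1 u v a) _)))))))).
  intros a u E1 E2. destruct (HL u a E2 E1). split; assumption.
Qed.

Ltac dm M := destruct M as (BS & BT & AA & AB & HA & HB & H1 & H2 & HL).

Arguments mps_swap {S T addS mulS addT mulT alpha alphainv beta betainv} _.


Lemma ai_a {S T addS mulS addT mulT alpha alphainv beta betainv} (M : @matched_product_system S T addS mulS addT mulT alpha alphainv beta betainv) u x : alphainv u (alpha u x) = x.
Proof. dm M. apply (AA u). Qed.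
Lemma a_ai {S T addS mulS addT mulT alpha alphainv beta betainv} (M : @matched_product_system S T addS mulS addT mulT alpha alphainv beta betainv) u x : alpha u (alphainv u x) = x.
Proof. dm M. apply (AA u). Qed.
Lemma a_add {S T addS mulS addT mulT alpha alphainv beta betainv} (M : @matched_product_system S T addS mulS addT mulT alpha alphainv beta betainv) u x y : alpha u (addS x y) = addS (alpha u x) (alpha u y).
Proof. dm M. apply (AA u). Qed.

Lemma a_idem {S T addS mulS addT mulT alpha alphainv beta betainv} (M : @matched_product_system S T addS mulS addT mulT alpha alphainv beta betainv) f x : mulT f f = f -> alpha f x = x.
Proof.
  intro Hf. pose proof M as M'. dm M'.
  assert (E : alpha f (alpha f x) = alpha f x) by (rewrite <- HA, Hf; reflexivity).
  apply (f_equal (alphainv f)) in E. rewrite !(ai_a M) in E. exact E.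
Qed.

Lemma ai_idem {S T addS mulS addT mulT alpha alphainv beta betainv} (M : @matched_product_system S T addS mulS addT mulT alpha alphainv beta betainv) f x : mulT f f = f -> alphainv f x = x.
Proof. intro Hf. rewrite <- (a_idem M f (alphainv f x) Hf). apply (a_ai M). Qed.

Lemma a_inv {S T addS mulS addT mulT alpha alphainv beta betainv} (M : @matched_product_system S T addS mulS addT mulT alpha alphainv beta betainv) u u' x : is_inverse_of mulT u u' -> alpha u' x = alphainv u x.
Proof.
  intros [I1 I2]. pose proof M as M'. dm M'.
  assert (E : forall y, alpha u' (alpha u y) = y).
  { intro y. assert (E : alpha u (alpha u' (alpha u y)) = alpha u y)
      by (rewrite <- !HA, I1; reflexivity).
    apply (f_equal (alphainv u)) in E. rewrite !(ai_a M) in E. exact E. }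
  rewrite <- (a_ai M u x) at 1. apply E.
Qed.

Lemma ai_inv {S T addS mulS addT mulT alpha alphainv beta betainv} (M : @matched_product_system S T addS mulS addT mulT alpha alphainv beta betainv) u u' x : is_inverse_of mulT u u' -> alphainv u' x = alpha u x.
Proof.
  intro I. rewrite <- (ai_a M u' (alpha u x)). rewrite (a_inv M u u' _ I), (ai_a M). reflexivity.
Qed.

Lemma K_lem {S T addS mulS addT mulT alpha alphainv beta betainv} (M : @matched_product_system S T addS mulS addT mulT alpha alphainv beta betainv) e u b : mulS e e = e -> alphainv u (mulS (alpha u e) b) = mulS e (alphainv u b).
Proof.
  intro He. pose proof M as M'. dm M'.
  destruct (proj2 (proj1 (proj2 BT)) u) as [u' [Hu' _]].
  pose proof (H1 e b u') as E.
  rewrite (ai_inv M u u' _ Hu'), !(a_inv M u u' _ Hu') in E.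
  rewrite (ai_idem (mps_swap M) e u' He), (a_inv M u u' _ Hu') in E. exact E.
Qed.

Lemma img_idem {S T addS mulS addT mulT alpha alphainv beta betainv} (M : @matched_product_system S T addS mulS addT mulT alpha alphainv beta betainv) e u : mulS e e = e -> mulS (alpha u e) (alpha u e) = alpha u e.
Proof.
  intro He. pose proof (K_lem M e u (alpha u e) He) as E.
  rewrite (ai_a M), He in E. rewrite <- (a_ai M u (mulS (alpha u e) (alpha u e))), E. reflexivity.
Qed.

Lemma bi_mul {S T addS mulS addT mulT alpha alphainv beta betainv} (M : @matched_product_system S T addS mulS addT mulT alpha alphainv beta betainv) a d y : betainv (mulS a d) (beta a y) = betainv d y.
Proof.
  pose proof M as M'. dm M'.
  transitivity (betainv (mulS a d) (beta (mulS a d) (betainv d y))).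
  - rewrite HB, (a_ai (mps_swap M) d y). reflexivity.
  - apply (ai_a (mps_swap M)).
Qed.

Lemma assoc1 {S T addS mulS addT mulT alpha alphainv beta betainv} (M : @matched_product_system S T addS mulS addT mulT alpha alphainv beta betainv) a u b v c :
  alpha (beta a (mulT (betainv a u) v))
    (mulS (alphainv (beta a (mulT (betainv a u) v)) (alpha u (mulS (alphainv u a) b))) c)
  = alpha u (mulS (alphainv u a) (alpha v (mulS (alphainv v b) c))).
Proof.
  pose proof M as M'. dm M'.
  rewrite (H1 (alpha u (mulS (alphainv u a) b)) c (beta a (mulT (betainv a u) v))).
  rewrite (H1 a b u). rewrite (H1 b c v), (H1 a _ u).
  set (W := betainv a u). set (d := alpha W b).
  rewrite (bi_mul M a d).
  assert (H1' : forall x y, alpha W (mulS x y) = mulS (alpha W x) (alpha (betainv (alpha W x) W) y)).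
  { intros x y. rewrite <- (H1 (alpha W x) y W), (ai_a M). reflexivity. }
  rewrite H1'. fold d. rewrite <- HA.
  assert (E : betainv d (mulT W v) = mulT (betainv d W) (betainv b v)).
  { pose proof (H2 d W (betainv b v)) as E0.
    replace (alphainv W d) with b in E0 by (unfold d; rewrite (ai_a M); reflexivity). rewrite (a_ai (mps_swap M)) in E0.
    rewrite <- E0. apply (ai_a (mps_swap M)). }
  rewrite E.
  destruct BS as [_ [[AS _] _]]. rewrite AS. reflexivity.
Qed.

Lemma inv_idem {A} (m : A -> A -> A) x y : semigroup m -> is_inverse_of m x y -> m (m x y) (m x y) = m x y.
Proof. intros As [I1 I2]. rewrite (As (m x y) x y), I1. reflexivity. Qed.

Lemma inv_idem2 {A} (m : A -> A -> A) x y : semigroup m -> is_inverse_of m x y -> m (m y x) (m y x) = m y x.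
Proof. intros As [I1 I2]. rewrite (As (m y x) y x), I2. reflexivity. Qed.

Lemma reg1 {S T addS mulS addT mulT alpha alphainv beta betainv} (M : @matched_product_system S T addS mulS addT mulT alpha alphainv beta betainv) a u z' w' : is_inverse_of mulS (alphainv u a) z' -> is_inverse_of mulT (betainv a u) w' ->
  alpha (beta a (mulT (betainv a u) w'))
    (mulS (alphainv (beta a (mulT (betainv a u) w')) (alpha u (mulS (alphainv u a) z'))) a) = a.
Proof.
  intros Hz Hw. pose proof M as M'. dm M'.
  assert (Sg : semigroup mulT) by apply BT.
  pose proof (img_idem (mps_swap M) _ a (inv_idem _ _ _ Sg Hw)) as Iq.
  rewrite (ai_idem M _ _ Iq), (a_idem M _ _ Iq).
  pose proof (K_lem M (mulS (alphainv u a) z') u a) as K.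
  assert (Sg' : semigroup mulS) by apply BS.
  rewrite <- (a_ai M u (mulS (alpha u (mulS (alphainv u a) z')) a)), K.
  - destruct Hz as [I1 _]. rewrite I1. apply (a_ai M).
  - apply (inv_idem _ _ _ Sg' Hz).
Qed.

Lemma reg2 {S T addS mulS addT mulT alpha alphainv beta betainv} (M : @matched_product_system S T addS mulS addT mulT alpha alphainv beta betainv) a u z' w' : is_inverse_of mulS (alphainv u a) z' -> is_inverse_of mulT (betainv a u) w' ->
  alpha w' (mulS (alphainv w' z') a) = mulS z' (alphainv u a).
Proof.
  intros Hz Hw. pose proof M as M'. dm M'.
  assert (Sg : semigroup mulT) by apply BT.
  rewrite (H1 z' a w'). f_equal.
  rewrite (ai_inv (mps_swap M) _ _ _ Hz).
  assert (C : forall x, alpha u (alpha (beta (alphainv u a) w') x) = x).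
  { intro x. rewrite <- HA, <- H2.
    apply (a_idem M). apply (img_idem (mps_swap M)). apply (inv_idem _ _ _ Sg Hw). }
  rewrite <- (ai_a M u (alpha (beta (alphainv u a) w') a)), C. reflexivity.
Qed.

Lemma P_idem_l {S T addS mulS addT mulT alpha alphainv beta betainv} (M : @matched_product_system S T addS mulS addT mulT alpha alphainv beta betainv) e f b v : mulS e e = e -> mulT f f = f ->
  mp_mul mulS mulT alpha alphainv beta betainv (e, f) (b, v) = (mulS e b, mulT f v).
Proof.
  intros He Hf. unfold mp_mul.
  rewrite (a_idem M f _ Hf), (ai_idem M f _ Hf), (a_idem (mps_swap M) e _ He), (ai_idem (mps_swap M) e _ He).
  reflexivity.
Qed.

Lemma P_idem {S T addS mulS addT mulT alpha alphainv beta betainv} (M : @matched_product_system S T addS mulS addT mulT alpha alphainv beta betainv) a u : mp_mul mulS mulT alpha alphainv beta betainv (a, u) (a, u) = (a, u) ->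
  mulS a a = a /\ mulT u u = u.
Proof.
  intro E. unfold mp_mul in E. injection E as E1 E2. pose proof M as M'. dm M'.
  destruct (HL a u E1 E2) as [F1 F2]. split.
  - assert (G : alphainv u a = a).
    { transitivity (alphainv u (alpha u a)); [rewrite F1; reflexivity | apply (ai_a M)]. }
    rewrite G in E1. rewrite <- (ai_a M u (mulS a a)), E1. exact G.
  - assert (G : betainv a u = u).
    { transitivity (betainv a (beta a u)); [rewrite F2; reflexivity | apply (ai_a (mps_swap M))]. }
    rewrite G in E2. rewrite <- (ai_a (mps_swap M) a (mulT u u)), E2. exact G.
Qed.

Lemma uniq_inv {A} (m : A -> A -> A) : semigroup m ->
  (forall e f, m e e = e -> m f f = f -> m e f = m f e) ->
  forall x y y', is_inverse_of m x y -> is_inverse_of m x y' -> y = y'.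
Proof.
  intros As C x y y' Hy Hy'.
  pose proof (inv_idem m x y As Hy) as Ixy.
  pose proof (inv_idem m x y' As Hy') as Ixy'.
  pose proof (inv_idem2 m x y As Hy) as Iyx.
  pose proof (inv_idem2 m x y' As Hy') as Iy'x.
  destruct Hy as [I1 I2]. destruct Hy' as [J1 J2].
  assert (E1 : y = m y (m x y')).
  { assert (Hxy : m x y = m (m x y') (m x y)) by (rewrite (As (m x y') x y), J1; reflexivity).
    transitivity (m (m y x) y); [symmetry; exact I2|].
    rewrite <- (As y x y), Hxy, (C _ _ Ixy' Ixy), (As y (m x y) (m x y')), (As y x y), I2.
    reflexivity. }
  assert (E2 : y' = m y (m x y')).
  { assert (Hyx : m y' x = m (m y' x) (m y x)) by (rewrite <- (As y' x (m y x)), (As x y x), I1; reflexivity).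
    transitivity (m (m y' x) y'); [symmetry; exact J2|].
    rewrite Hyx, (C _ _ Iy'x Iyx), <- (As (m y x) (m y' x) y'), J2, (As y x y'). reflexivity. }
  congruence.
Qed.

Lemma idem_comm {A} (m : A -> A -> A) : inverse_semigroup m ->
  forall e f, m e e = e -> m f f = f -> m e f = m f e.
Proof.
  intros [As Inv].
  assert (idr : forall f X, m f f = f -> m (m X f) f = m X f).
  { intros f X Hf. rewrite <- As, Hf. reflexivity. }
  assert (U : forall x y y', is_inverse_of m x y -> is_inverse_of m x y' -> y = y').
  { intros x y y' H H'. destruct (Inv x) as [b [_ Ub]].
    rewrite <- (Ub y H), <- (Ub y' H'). reflexivity. }
  assert (Id : forall e f, m e e = e -> m f f = f -> m (m e f) (m e f) = m e f).
  { intros e f He Hf. destruct (Inv (m e f)) as [x [Hx _]].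
    pose proof Hx as Hx0. destruct Hx as [I1 I2].
    assert (L : forall Y, m (m (m (m Y x) e) f) x = m Y x).
    { intro Y. rewrite <- I2 at 3. repeat rewrite As. reflexivity. }
    repeat rewrite As in I1.
    assert (Hx' : is_inverse_of m (m e f) (m (m f x) e)).
    { split.
      - repeat rewrite As. rewrite ?(idr _ _ Hf), ?(idr _ _ He). exact I1.
      - repeat rewrite As. rewrite ?(idr _ _ Hf), ?(idr _ _ He), L. reflexivity. }
    assert (Ex : x = m (m f x) e) by (apply (U (m e f)); [exact Hx0 | exact Hx']).
    assert (Xi : m x x = x).
    { rewrite Ex at 1 2. repeat rewrite As. rewrite L. symmetry; exact Ex. }
    assert (H1 : is_inverse_of m x x) by (split; rewrite !Xi; reflexivity).
    assert (H2 : is_inverse_of m x (m e f)).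
    { split; [|exact (proj1 Hx0)]. rewrite <- I2 at 3. repeat rewrite As. reflexivity. }
    rewrite <- (U _ _ _ H1 H2). exact Xi. }
  intros e f He Hf.
  pose proof (Id e f He Hf) as Ief. pose proof (Id f e Hf He) as Ife.
  repeat rewrite As in Ief. repeat rewrite As in Ife.
  assert (H1 : is_inverse_of m (m e f) (m e f)).
  { split; repeat rewrite As; rewrite ?(idr _ _ Hf), ?(idr _ _ He); repeat rewrite Ief; reflexivity. }
  assert (H2 : is_inverse_of m (m e f) (m f e)).
  { split; repeat rewrite As; rewrite ?(idr _ _ Hf), ?(idr _ _ He); repeat rewrite Ief; repeat rewrite Ife; reflexivity. }
  apply (U _ _ _ H1 H2).
Qed.

Theorem theorem24 (S T : Type)
  (addS mulS : S -> S -> S) (addT mulT : T -> T -> T)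
  (alpha alphainv : T -> S -> S) (beta betainv : S -> T -> T) :
  matched_product_system addS mulS addT mulT alpha alphainv beta betainv ->
  left_inverse_semi_brace (mp_add addS addT)
    (mp_mul mulS mulT alpha alphainv beta betainv).
Proof.
  intro M. pose proof M as M'. dm M'.
  set (P := mp_mul mulS mulT alpha alphainv beta betainv).
  destruct BS as [ASd [[ASm InvS] BrS]].
  destruct BT as [ATd [[ATm InvT] BrT]].
  assert (semP : semigroup P).
  { intros [a u] [b v] [c w]. unfold P, mp_mul. f_equal.
    - symmetry. apply (assoc1 M).
    - symmetry. apply (assoc1 (mps_swap M) u a v b w). }
  assert (regP : forall a u z' w', is_inverse_of mulS (alphainv u a) z' ->
            is_inverse_of mulT (betainv a u) w' -> is_inverse_of P (a, u) (z', w')).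
  { intros a u z' w' Hz Hw. split.
    - unfold P, mp_mul. f_equal.
      + apply (reg1 M); assumption.
      + apply (reg1 (mps_swap M) u a w' z'); assumption.
    - assert (E : P (z', w') (a, u) = (mulS z' (alphainv u a), mulT w' (betainv a u))).
      { unfold P, mp_mul. f_equal.
        + apply (reg2 M); assumption.
        + apply (reg2 (mps_swap M) u a w' z'); assumption. }
      rewrite E. unfold P. rewrite (P_idem_l M).
      + destruct Hz as [_ Hz]. destruct Hw as [_ Hw]. rewrite Hz, Hw. reflexivity.
      + apply (inv_idem2 _ _ _ ASm Hz).
      + apply (inv_idem2 _ _ _ ATm Hw). }
  assert (commP : forall e f, P e e = e -> P f f = f -> P e f = P f e).
  { intros [e1 e2] [f1 f2] He Hf.
    destruct (P_idem M _ _ He) as [He1 He2]. destruct (P_idem M _ _ Hf) as [Hf1 Hf2].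
    unfold P. rewrite (P_idem_l M _ _ _ _ He1 He2), (P_idem_l M _ _ _ _ Hf1 Hf2).
    rewrite (idem_comm mulS (conj ASm InvS) e1 f1 He1 Hf1),
            (idem_comm mulT (conj ATm InvT) e2 f2 He2 Hf2). reflexivity. }
  assert (invP : forall a u z' w' y, is_inverse_of mulS (alphainv u a) z' ->
            is_inverse_of mulT (betainv a u) w' -> is_inverse_of P (a, u) y -> y = (z', w')).
  { intros a u z' w' y Hz Hw Hy.
    apply (uniq_inv P semP commP (a, u)); [exact Hy | apply regP; assumption]. }
  split; [|split].
  - intros [a u] [b v] [c w]. unfold mp_add. simpl. rewrite ASd, ATd. reflexivity.
  - split; [exact semP|]. intros [a u].
    destruct (InvS (alphainv u a)) as [z' [Hz _]].
    destruct (InvT (betainv a u)) as [w' [Hw _]].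
    exists (z', w'). split.
    + apply regP; assumption.
    + intros y Hy. symmetry. apply (invP a u z' w' y Hz Hw Hy).
  - intros [a u] y [b v] [c w] Hy.
    destruct (InvS (alphainv u a)) as [z' [Hz _]].
    destruct (InvT (betainv a u)) as [w' [Hw _]].
    rewrite (invP a u z' w' y Hz Hw Hy).
    unfold mp_add, mp_mul. simpl. f_equal.
    + rewrite (BrS _ _ _ _ Hz), (a_add M). reflexivity.
    + rewrite (BrT _ _ _ _ Hw). destruct (AB a) as [Ad _]. rewrite Ad. reflexivity.
Qed.
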